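(* Every graph $G$ satisfies $\chi'_{qm}(G)\le 3$.
   Context: All graphs are simple and finite. A $k$-edge-coloring of $G$ is any map $c:E(G)\to\{1,\dots,k\}$ (adjacent edges may share colors). It is quasi-majority if every vertex $v$ is incident to at most $\lceil d(v)/2\rceil$ edges of each single color. $\chi'_{qm}(G)$ denotes the least $k$ such that $G$ has a quasi-majority $k$-edge-coloring. *)

(* Defs.v *)
From mathcomp Require Import all_boot.
Set Implicit Arguments. Unset Strict Implicit. Unset Printing Implicit Defensive.

(* A finite simple graph: vertex type V (finType), adjacency relation e that is
   symmetric and irreflexive.  An edge uv is represented by the 2-set [set u; v]. *)
Definition simple_graph (V : finType) (e : rel V) : Prop :=
  symmetric e /\ irreflexive e.

Definition nbhd (V : finType) (e : rel V) (v : V) : {set V} := [set u | e v u].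
Definition deg (V : finType) (e : rel V) (v : V) : nat := #|nbhd e v|.

(* A k-edge-coloring: a colour in 'I_k for every edge (the values of c on
   non-edges are irrelevant). *)
Definition edge_coloring (V : finType) (k : nat) := {set V} -> 'I_k.

Definition quasi_majority (V : finType) (e : rel V) (k : nat)
  (c : edge_coloring V k) : Prop :=
  forall (v : V) (i : 'I_k),
    #|[set u in nbhd e v | c [set v; u] == i]| <= uphalf (deg e v).

Definition qm_colorable (V : finType) (e : rel V) (k : nat) : Prop :=
  exists c : edge_coloring V k, quasi_majority e c.

(* Main.v *)
Require Import Defs.
From mathcomp Require Import all_boot.
Set Implicit Arguments. Unset Strict Implicit. Unset Printing Implicit Defensive.

Definition cnt (V : finType) (e : rel V) k (c : {set V} -> 'I_k) v i :=
  #|[set u in nbhd e v | c [set v; u] == i]|.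
Definition rmE (V : finType) (e : rel V) (E : {set V}) : rel V :=
  fun x y => e x y && ([set x; y] != E).
Definition recol (V : finType) k (c : {set V} -> 'I_k) (E : {set V}) col
  : {set V} -> 'I_k := fun S => if S == E then col else c S.

Lemma key (V : finType) (e : rel V) (E : {set V}) k (c : {set V} -> 'I_k) col x y i :
  irreflexive e -> [set x; y] = E -> e x y ->
  deg e x = (deg (rmE e E) x).+1 /\
  cnt e (recol c E col) x i = cnt (rmE e E) c x i + (col == i).
Proof.
move=> irr HE exy.
have H: forall u, e x u -> ([set x; u] == E) = (u == y).
  move=> u exu; rewrite -HE; apply/eqP/eqP => [h|->//].
  have: u \in [set x; y] by rewrite -h !inE eqxx orbT.
  rewrite !inE => /orP[/eqP ux|/eqP//]; subst.
  by rewrite irr in exu.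
split.
  rewrite /deg (cardD1 y) /nbhd [y \in _]inE exy add1n; congr (_.+1).
  apply: eq_card => u; rewrite !inE /rmE.
  by case: (boolP (e x u)) => exu; rewrite /= ?andbT ?andbF ?H.
rewrite /cnt (cardD1 y) /nbhd [y \in _]inE inE exy /recol HE eqxx /= addnC.
congr (_ + _); apply: eq_card => u; rewrite !inE /rmE.
case: (boolP (e x u)) => exu; rewrite /= ?andbT ?andbF ?H //.
by case: (u == y).
Qed.

Lemma other (V : finType) (e : rel V) (E : {set V}) k (c : {set V} -> 'I_k) col v i :
  v \notin E ->
  deg e v = deg (rmE e E) v /\
  cnt e (recol c E col) v i = cnt (rmE e E) c v i.
Proof.
move=> vE.
have H: forall u, ([set v; u] == E) = false.
  move=> u; apply/negP => /eqP h; move: vE; rewrite -h !inE eqxx.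
  done.
split.
  by apply: eq_card => u; rewrite !inE /rmE H andbT.
by apply: eq_card => u; rewrite !inE /rmE /recol H andbT.
Qed.

Lemma twobad (V : finType) (e : rel V) k (c : {set V} -> 'I_k) v i j :
  i != j -> odd (deg e v) -> uphalf (deg e v) <= cnt e c v i ->
  uphalf (deg e v) <= cnt e c v j -> False.
Proof.
move=> ij od hi hj.
set A := [set u in nbhd e v | c [set v; u] == i].
set B := [set u in nbhd e v | c [set v; u] == j].
have AB0 : A :&: B = set0.
  apply/setP => u; rewrite !inE.
  case: (c [set v; u] =P i) => [->|]; last by rewrite !andbF.
  by rewrite (negbTE ij) !andbF.
have sub : A :|: B \subset nbhd e v.
  by apply/subsetP => u; rewrite !inE => /orP[/andP[]|/andP[]].
have := cardsUI A B; rewrite AB0 cards0 addn0 => h.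
have := subset_leq_card sub; rewrite h -/(deg e v).
move: hi hj; rewrite /cnt -/A -/B => hi hj.
have := odd_uphalfK od; rewrite -addnn => hu.
move=> hle; have := leq_add hi hj; rewrite hu => h2.
by have := leq_trans h2 hle; rewrite ltnn.
Qed.

Lemma finish d x (b : bool) :
  x <= uphalf d -> (b -> ~~ odd d || (x < uphalf d)) ->
  x + b <= uphalf d.+1.
Proof.
have E : uphalf d.+1 = (d./2).+1 by rewrite uphalfE.
rewrite E uphalf_half => hx hb.
case: b hb => [/(_ isT)|_]; last first.
  by rewrite addn0 (leq_trans hx) // addnC -addn1 leq_add2l leq_b1.
by case: (odd d) hx => /= hx; rewrite ?add1n ?addn1 // => _; rewrite ltnS.
Qed.

Definition edges (V : finType) (e : rel V) := [set p : V * V | e p.1 p.2].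

Lemma gen (V : finType) n : forall e : rel V, symmetric e -> irreflexive e ->
  #|edges e| <= n -> exists c : {set V} -> 'I_3, quasi_majority e c.
Proof.
elim: n => [|n IH] e sym irr hn.
  exists (fun _ => ord0) => v i.
  suff -> : [set u in nbhd e v | ord0 == i] = set0 by rewrite cards0.
  apply/setP => u; rewrite !inE.
  have : (v, u) \notin edges e by move: hn; rewrite leqn0 cards_eq0 => /eqP ->; rewrite inE.
  by rewrite inE /= => /negbTE ->.
have [E0|] := eqVneq (edges e) set0.
  exists (fun _ => ord0) => v i.
  suff -> : [set u in nbhd e v | ord0 == i] = set0 by rewrite cards0.
  apply/setP => u; rewrite !inE.
  have : (v, u) \notin edges e by rewrite E0 inE.
  by rewrite inE /= => /negbTE ->.
case/set0Pn => [[a b]]; rewrite inE /= => eab.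
set E := [set a; b].
set e' := rmE e E.
have sym' : symmetric e'.
  by move=> x y; rewrite /e' /rmE sym setUC.
have irr' : irreflexive e'.
  by move=> x; rewrite /e' /rmE irr.
have hn' : #|edges e'| <= n.
  rewrite -ltnS; apply: leq_trans hn; apply: proper_card.
  apply/properP; split.
    by apply/subsetP => p; rewrite !inE /e' /rmE => /andP[].
  by exists (a, b); rewrite !inE /e' /rmE /= ?eab // eqxx andbF.
have [c' qc'] := IH e' sym' irr' hn'.
pose goodv v (i : 'I_3) := ~~ odd (deg e' v) || (cnt e' c' v i < uphalf (deg e' v)).
have tb : forall v, #|[set i | ~~ goodv v i]| <= 1.
  move=> v; apply/card_le1_eqP => i j; rewrite !inE /goodv !negb_or !negbK -!leqNgt.
  case/andP=> od hi /andP[_ hj]; case: (eqVneq j i) => // ji.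
  by case: (twobad ji od hj hi).
have [col gcol] : exists col, goodv a col && goodv b col.
  set U := [set i | ~~ goodv a i] :|: [set i | ~~ goodv b i].
  have hU : #|U| < 3.
    rewrite cardsU; apply: leq_ltn_trans (leq_subr _ _) _.
    exact: leq_ltn_trans (leq_add (tb a) (tb b)) _.
  have : ~: U != set0.
    rewrite -card_gt0; have := cardsC U; rewrite card_ord => h.
    by rewrite -(ltn_add2l #|U|) h addn0.
  case/set0Pn => i; rewrite !inE negb_or !negbK => /andP[ga gb].
  by exists i; rewrite ga gb.
case/andP: gcol => ga gb.
exists (recol c' E col) => v i.
have fin : forall x y, [set x; y] = E -> e x y -> goodv x col ->
    #|[set u in nbhd e x | recol c' E col [set x; u] == i]| <= uphalf (deg e x).
  move=> x y hE exy gx.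
  have [-> h2] := @key V e E 3 c' col x y i irr hE exy.
  move: h2; rewrite /cnt => ->.
  apply: finish; first exact: qc'.
  by case: (col =P i) => // <-.
have [vE|vE] := boolP (v \in E).
  move: vE; rewrite !inE => /orP[]/eqP->.
    exact: (fin a b).
  apply: (fin b a) => //; last by rewrite sym.
  by apply/setP => z; rewrite !inE orbC.
have [-> h2] := @other V e E 3 c' col v i vE.
by move: h2; rewrite /cnt => ->; apply: qc'.
Qed.

Theorem mainTheorem13 (V : finType) (e : rel V) :
  simple_graph e -> exists k, k <= 3 /\ qm_colorable e k.
Proof.
case=> sym irr; have [c qc] := gen sym irr (leqnn #|edges e|).
by exists 3; split => //; exists c.
Qed.
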